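(* For every $C>1$ there is $n_C\in\mathbb N$ such that the following holds. Every $C$-bipartite-Ramsey graph $G=(V_1,V_2,E)$ with $|V_1|,|V_2|\ge n_C$ has at least $2|V_1|/3$ vertices $v\in V_1$ with $(32C)^{-1}|V_2|\le d_G(v)\le (1-(32C)^{-1})|V_2|$.
   Context: A bipartite graph $G=(V_1,V_2,E)$ has vertex set $V_1\sqcup V_2$ and edge set $E\subset V_1\times V_2$; $d_G(v)$ is the degree of $v$. Given $C>0$, $G$ is called $C$-bipartite-Ramsey if for all integers $t_1\ge C\log_2|V_1|$ and $t_2\ge C\log_2|V_2|$ there are no $T_1\subset V_1$, $T_2\subset V_2$ with $|T_1|=t_1$, $|T_2|=t_2$ such that all pairs in $T_1\times T_2$ are edges, or all are non-edges. *)

(* Defs.v *)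
From mathcomp Require Import all_boot.
From Stdlib Require Import Reals.
Set Implicit Arguments. Unset Strict Implicit. Unset Printing Implicit Defensive.

Definition log2 (x : R) : R := (ln x / ln 2)%R.

Definition deg1 (V1 V2 : finType) (E : V1 -> V2 -> bool) (v : V1) : nat :=
  #|[set y | E v y]|.

Definition bipartite_ramsey (C : R) (V1 V2 : finType) (E : V1 -> V2 -> bool)
  : Prop :=
  forall t1 t2 : nat,
    (INR t1 >= C * log2 (INR #|V1|))%R ->
    (INR t2 >= C * log2 (INR #|V2|))%R ->
    ~ exists (T1 : {set V1}) (T2 : {set V2}),
        #|T1| = t1 /\ #|T2| = t2 /\
        ((forall x y, x \in T1 -> y \in T2 -> E x y) \/
         (forall x y, x \in T1 -> y \in T2 -> ~~ E x y)).

(* Main.v *)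
Require Import Defs.
From mathcomp Require Import all_boot.
From Stdlib Require Import Reals Lra Lia.
From mathcomp Require Import zify.
Set Implicit Arguments. Unset Strict Implicit. Unset Printing Implicit Defensive.
Lemma sub_exact (T : finType) (A : {set T}) k :
  (k <= #|A|)%N -> exists B : {set T}, B \subset A /\ #|B| = k.
Proof.
elim: k => [|k IH] hk.
  by exists set0; rewrite sub0set cards0.
have [B [sBA cB]] := IH (ltnW hk).
have : (0 < #|A :\: B|)%N by rewrite cardsD (setIidPr sBA) cB subn_gt0.
case/card_gt0P => x; rewrite inE => /andP [xB xA].
exists (x |: B); split; first by rewrite subUset sub1set xA.
by rewrite cardsU1 xB cB.
Qed.

Definition degin (T1 T2 : finType) (R : T1 -> T2 -> bool) (Y : {set T2}) (x : T1) :=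
  #|Y :&: [set y | R x y]|.

Lemma double_count (T1 T2 : finType) (R : T1 -> T2 -> bool) (W : {set T1}) (Y : {set T2}) :
  \sum_(y in Y) #|W :&: [set x | R x y]| = \sum_(x in W) degin R Y x.
Proof.
have E1 : forall (T : finType) (A B : {set T}), #|A :&: B| = \sum_(i in A) (i \in B : nat).
  move=> T A B; rewrite -sum1_card big_mkcond /= [RHS]big_mkcond /=.
  by apply: eq_bigr => i _; rewrite inE; case: (i \in A); case: (i \in B).
under eq_bigr do rewrite E1.
rewrite exchange_big /=; apply: eq_bigr => x _.
by rewrite /degin E1; apply: eq_bigr => y _; rewrite !inE.
Qed.

Lemma greedy (T1 T2 : finType) (R : T1 -> T2 -> bool) (X : {set T1}) (Y : {set T2}) (d : nat) :
  (forall x, x \in X -> degin R Y x <= d)%N ->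
  (2 * d <= #|Y|)%N ->
  forall k, (2 * k <= #|Y|)%N ->
  exists T : {set T2}, exists W : {set T1},
    T \subset Y /\ #|T| = k /\ W \subset X /\
    (forall x y, x \in W -> y \in T -> ~~ R x y) /\
    (INR #|X| * (1 - 2 * INR d / INR #|Y|) ^ k <= INR #|W|)%R.
Proof.
move=> hdeg hd; elim=> [|k IH] hk.
  exists set0, X; split; first exact: sub0set.
  split; first by rewrite cards0.
  split; first exact: subxx.
  split; first by move=> x y _; rewrite inE.
  rewrite pow_O; lra.
have hk' : (2 * k <= #|Y|)%N by lia.
have [T [W [sTY [cT [sWX [hWT hW]]]]]] := IH hk'.
set Y' := Y :\: T.
have cY' : #|Y'| = (#|Y| - k)%N by rewrite cardsD (setIidPr sTY) cT.
have Y'0 : (0 < #|Y'|)%N by rewrite cY'; lia.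
case/card_gt0P: Y'0 => y0 y0Y.
pose f y := #|W :&: [set x | R x y]|.
case: (arg_minnP f y0Y) => y yY' ymin.
have hsum : (#|Y'| * f y <= #|W| * d)%N.
  apply: (@leq_trans (\sum_(z in Y') f z)).
    rewrite -sum_nat_const; exact: leq_sum.
  rewrite /f double_count -sum_nat_const; apply: leq_sum => x xW.
  apply: leq_trans (hdeg x (subsetP sWX x xW)).
  by apply: subset_leq_card; apply: setSI; apply: subsetDl.
have hfy : (f y * #|Y| <= 2 * (#|W| * d))%N.
  have h2 : (#|Y| <= 2 * #|Y'|)%N by rewrite cY'; lia.
  apply: leq_trans (leq_mul (leqnn (f y)) h2) _.
  rewrite mulnCA; rewrite leq_mul2l; apply/orP; right; by rewrite mulnC.
have : y \in Y' by []. rewrite /Y' in_setD => /andP [yT yY].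
exists (y |: T), (W :\: [set x | R x y]).
split; first by rewrite subUset sub1set yY sTY.
split; first by rewrite cardsU1 yT cT.
split; first by apply: subset_trans (subsetDl _ _) sWX.
split.
  move=> x z; rewrite !inE => /andP [nR xW] /orP [/eqP -> | zT] //.
  exact: hWT.
have cW' : #|W :\: [set x | R x y]| = (#|W| - f y)%N by rewrite cardsD.
have fW : (f y <= #|W|)%N by apply: subset_leq_card; apply: subsetIl.
rewrite cW' minus_INR; last by apply/leP.
have Ypos : (0 < INR #|Y|)%R by apply: lt_0_INR; apply/ltP; lia.
have hfyR : (INR (f y) * INR #|Y| <= 2 * (INR #|W| * INR d))%R.
  rewrite -!mult_INR -[2%R]/(INR 2) -mult_INR; apply: le_INR; apply/leP; exact: hfy.
have hdR : (2 * INR d <= INR #|Y|)%R.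
  rewrite -[2%R]/(INR 2) -mult_INR; apply: le_INR; apply/leP; exact: hd.
have r0 : (0 <= 1 - 2 * INR d / INR #|Y|)%R.
  suff : (2 * INR d / INR #|Y| <= 1)%R by lra.
  apply (Rmult_le_reg_r (INR #|Y|)) => //.
  unfold Rdiv; rewrite Rmult_assoc Rinv_l; lra.
rewrite -tech_pow_Rmult Rmult_comm Rmult_assoc.
apply: Rle_trans (Rmult_le_compat_l _ _ _ r0 (Rle_trans _ _ _ (Req_le _ _ (Rmult_comm _ _)) hW)) _.
have : (INR (f y) <= 2 * INR d / INR #|Y| * INR #|W|)%R.
  apply (Rmult_le_reg_r (INR #|Y|)) => //.
  unfold Rdiv; replace (2 * INR d * / INR #|Y| * INR #|W| * INR #|Y|)%R
    with (2 * (INR #|W| * INR d) * (/ INR #|Y| * INR #|Y|))%R by ring.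
  rewrite Rinv_l; lra.
nra.
Qed.
Local Open Scope R_scope.
Lemma exp_ge1 x : 0 <= x -> 1 + x <= exp x.
Proof.
move=> hx; case: (Req_dec x 0) => [->|nz]; first by rewrite exp_0; lra.
by apply: Rlt_le; apply: exp_ineq1.
Qed.

Lemma exp_sq x : 0 <= x -> x * x / 4 <= exp x.
Proof.
move=> hx; have e : exp x = exp (x/2) * exp (x/2) by rewrite -exp_plus; f_equal; lra.
have := exp_ge1 (Rmult_le_pos _ _ hx (Rlt_le _ _ (Rinv_0_lt_compat 2 Rlt_0_2))).
rewrite e; unfold Rdiv in *; nra.
Qed.

Lemma exp_le_1mq q : 0 <= q <= /2 -> exp (-(2*q)) <= 1 - q.
Proof.
move=> [h0 h1]; have h := exp_ge1 (Rmult_le_pos 2 q ltac:(lra) h0).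
rewrite exp_Ropp.
have hp : 0 < exp (2 * q) by apply: exp_pos.
apply (Rmult_le_reg_r (exp (2*q))) => //.
rewrite Rinv_l; last lra.
nra.
Qed.

Lemma pow_1mq q k : 0 <= q <= /2 -> exp (-(2*q*INR k)) <= (1 - q) ^ k.
Proof.
move=> hq; elim: k => [|k IH]; first by rewrite /= Rmult_0_r Ropp_0 exp_0; lra.
rewrite S_INR /= -[(1 - q) * _]Rmult_comm.
replace (-(2 * q * (INR k + 1))) with (-(2*q*INR k) + -(2*q)) by ring.
rewrite exp_plus; apply: Rmult_le_compat => //; try (apply: Rlt_le; apply: exp_pos).
exact: exp_le_1mq.
Qed.

Lemma ceil_nat x : 0 <= x -> exists k : nat, x <= INR k <= x + 1.
Proof.
move=> hx; have [h1 h2] := archimed x.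
have z0 : (0 <= up x)%Z by apply: le_IZR; lra.
exists (Z.to_nat (up x)); rewrite INR_IZR_INZ Znat.Z2Nat.id //; lra.
Qed.
Lemma exp_mono x y : x <= y -> exp x <= exp y.
Proof. case=> [h|->]; [apply: Rlt_le; exact: exp_increasing | lra]. Qed.

Lemma ln_mono x y : 0 < x -> x <= y -> ln x <= ln y.
Proof. move=> h0; case=> [h|->]; [apply: Rlt_le; exact: ln_increasing | lra]. Qed.

Lemma INR2m m : INR (2 * m) = 2 * INR m.
Proof. by rewrite mult_INR /=; ring. Qed.

Lemma leR_nat m n : INR m <= INR n -> leq m n.
Proof. by move=> h; apply/leP; apply: INR_le. Qed.

Lemma ltR_nat m n : leq (S m) n -> INR m < INR n.
Proof. by move=> h; apply: lt_INR; apply/ltP. Qed.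

Lemma leR_natR m n : leq m n -> INR m <= INR n.
Proof. by move=> h; apply: le_INR; apply/leP. Qed.

Lemma log2_le x : 0 <= ln x -> log2 x <= 2 * ln x.
Proof.
move=> h; have l2 := ln_lt_2; rewrite /log2.
apply (Rmult_le_reg_r (ln 2)); first lra.
unfold Rdiv; rewrite Rmult_assoc Rinv_l; nra.
Qed.

Lemma log2_ge0 x : 0 <= ln x -> 0 <= log2 x.
Proof.
move=> h; have l2 := ln_lt_2; rewrite /log2; unfold Rdiv.
apply: Rmult_le_pos => //; apply: Rlt_le; apply: Rinv_0_lt_compat; lra.
Qed.
Definition rltb (x y : R) : bool := if Rlt_dec x y then true else false.
Lemma rltbP x y : rltb x y <-> x < y.
Proof. by rewrite /rltb; case: (Rlt_dec x y). Qed.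

Lemma pos_nat n : leq 1%nat n -> 0 < INR n.
Proof. by move=> h; apply: lt_0_INR; apply/ltP. Qed.

Lemma low (C : R) (V1 V2 : finType) (E : V1 -> V2 -> bool) :
  1 < C -> bipartite_ramsey C E ->
  1000 * C <= ln (INR #|V1|) -> 1000 * C <= ln (INR #|V2|) ->
  leq 1%nat #|V1| -> leq 1%nat #|V2| ->
  leq (muln 6%nat #|[set v | rltb (INR (deg1 E v)) (INR #|V2| / (32 * C))]|) #|V1|.
Proof.
move=> hC hR hL1 hL2 p1 p2.
set A := [set v | _].
rewrite leqNgt; apply/negP => hA.
have en1 : INR #|V1| = exp (ln (INR #|V1|)) by rewrite exp_ln //; apply: pos_nat.
have en2 : INR #|V2| = exp (ln (INR #|V2|)) by rewrite exp_ln //; apply: pos_nat.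
have n1pos : 0 < INR #|V1| by apply: pos_nat.
have n2pos : 0 < INR #|V2| by apply: pos_nat.
move: en1 en2 hL1 hL2 n1pos n2pos.
set n1 := #|V1|; set n2 := #|V2|; set L1 := ln (INR n1); set L2 := ln (INR n2).
move=> en1 en2 hL1 hL2 n1pos n2pos.
have l2 := ln_lt_2.
have [k1 [hk1a hk1b]] := ceil_nat (Rmult_le_pos _ _ (ltac:(lra) : 0 <= C) (log2_ge0 (ltac:(lra) : 0 <= L1))).
have [k2 [hk2a hk2b]] := ceil_nat (Rmult_le_pos _ _ (ltac:(lra) : 0 <= C) (log2_ge0 (ltac:(lra) : 0 <= L2))).
have hk1 : INR k1 <= 3 * C * L1.
  have := log2_le (ltac:(lra) : 0 <= L1); rewrite -/L1 => h; nra.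
have hk2 : INR k2 <= 3 * C * L2.
  have := log2_le (ltac:(lra) : 0 <= L2); rewrite -/L2 => h; nra.
have k1pos : 0 <= INR k1 by apply: pos_INR.
have k2pos : 0 <= INR k2 by apply: pos_INR.
have hR' := hR k1 k2 (Rle_ge _ _ hk1a) (Rle_ge _ _ hk2a).
have hAR : INR n1 < 6 * INR #|A|.
  apply: (Rlt_le_trans _ _ _ (ltR_nat hA)); rewrite mult_INR /=; lra.
have A0 : leq 1%nat #|A| by rewrite lt0n; apply/eqP => h; move: hAR; rewrite h /=; lra.
set D := \max_(x in A) deg1 E x.
have hD : forall x, x \in A -> leq (deg1 E x) D by move=> x xA; exact: leq_bigmax_cond.
have hDR : INR D < INR n2 / (32 * C).
  rewrite /D; case: (eq_bigmax_cond (deg1 E) A0) => x0 x0A ->.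
  by move: x0A; rewrite inE => /rltbP.
have Dpos : 0 <= INR D by apply: pos_INR.
have hDR' : INR D * (32 * C) < INR n2.
  move: hDR; unfold Rdiv => h.
  have : INR n2 * / (32 * C) * (32 * C) = INR n2 by field; lra.
  nra.
have sq1 := exp_sq (ltac:(lra) : 0 <= L1).
have sq2 := exp_sq (ltac:(lra) : 0 <= L2).
case: (leqP n2 n1) => hn.
-
  have hLL : L2 <= L1 by apply: ln_mono => //; apply: leR_natR.
  have g1 : forall x, x \in A -> leq (degin E [set: V2] x) D.
    by move=> x xA; rewrite /degin setTI; exact: hD.
  have g2 : leq (2 * D)%nat #|[set: V2]|.
    rewrite cardsT; apply: leR_nat; rewrite INR2m; apply: (Rle_trans _ (INR n2)); [nra | exact: Rle_refl].
  have g3 : leq (2 * k2)%nat #|[set: V2]|.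
    rewrite cardsT; apply: leR_nat; rewrite INR2m; apply: (Rle_trans _ (INR n2)); [rewrite en2; nra | exact: Rle_refl].
  have [T [W [_ [cT [sWA [hWT hW]]]]]] := greedy g1 g2 g3.
  move: hW; rewrite cardsT -/n2; set q := 2 * INR D / INR n2 => hW.
  have q16 : q * (16 * C) < 1.
    rewrite /q; apply (Rmult_lt_reg_r (INR n2)) => //.
    have : 2 * INR D / INR n2 * (16 * C) * INR n2 = INR D * (32 * C) by field; lra.
    lra.
  have q0 : 0 <= q by rewrite /q; unfold Rdiv; apply: Rmult_le_pos; [lra| apply: Rlt_le; apply: Rinv_0_lt_compat].
  have hp := pow_1mq k2 (conj q0 (ltac:(nra) : q <= /2)).
  have e1 : -(L1/4 + 1/8) <= -(2 * q * INR k2).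
    have : INR k2 <= 2 * C * L2 + 1.
      have := log2_le (ltac:(lra) : 0 <= L2); rewrite -/L2 => h; nra.
    nra.
  have e2 := exp_mono e1.
  have hAp : 0 <= INR #|A| by apply: pos_INR.
  have e3 : INR #|A| * exp (-(L1/4 + 1/8)) <= INR #|W|.
    apply: Rle_trans hW; apply: Rmult_le_compat_l => //; lra.
  have e4 : exp (L1 / 2) <= exp L1 * exp (-(L1/4 + 1/8)).
    rewrite -exp_plus; apply: exp_mono; lra.
  have e5 := exp_sq (ltac:(lra) : 0 <= L1 / 2).
  have ep : 0 < exp (-(L1/4 + 1/8)) by apply: exp_pos.
  have hkW : INR k1 <= INR #|W| by nra.
  have [T1 [sT1 cT1]] := sub_exact (leR_nat hkW).
  apply: hR'; exists T1, T; split => //; split => //; right.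
  move=> x y xT1 yT; apply: hWT => //; exact: (subsetP sT1).
-
  have hLL : L1 <= L2 by apply: ln_mono => //; apply: leR_natR; apply: ltnW.
  set f := fun y => #|A :&: [set x | E x y]|.
  have hsum : leq (\sum_(y in [set: V2]) f y) (#|A| * D)%nat.
    rewrite /f double_count -sum_nat_const; apply: leq_sum => x xA.
    by rewrite /degin setTI; exact: hD.
  set V2' := [set y | leq (f y * n2)%nat (2 * #|A| * D)%nat].
  have hB : leq (2 * #|~: V2'|)%nat n2.
    have s1 : leq (#|~: V2'| * (2 * #|A| * D + 1))%nat (#|A| * D * n2)%nat.
      rewrite -sum_nat_const.
      apply: (@leq_trans (\sum_(y in ~: V2') (f y * n2)%nat)).
        apply: leq_sum => y; rewrite !inE -ltnNge; by rewrite addn1.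
      apply: (@leq_trans (\sum_(y in [set: V2]) (f y * n2)%nat)).
        rewrite [X in leq X _]big_mkcond [X in leq _ X]big_mkcond; apply: leq_sum => y _.
        by rewrite in_setT; case: ifP.
      by rewrite -big_distrl /=; rewrite leq_mul2r hsum orbT.
    move: s1; set P := (#|A| * D)%nat; set b := #|~: V2'|.
    move=> s1. nia.
  have cV : addn #|V2'| #|~: V2'| = n2 by rewrite cardsC.
  have V0 : leq 1 #|V2'| by lia.
  set d' := \max_(y in V2') f y.
  have hd' : forall y, y \in V2' -> leq (f y) d' by move=> y yV; exact: leq_bigmax_cond.
  have hd'R : INR d' * INR n2 <= 2 * INR #|A| * INR D.
    rewrite /d'; case: (eq_bigmax_cond f V0) => y0 y0V ->.
    move: y0V; rewrite inE => /leR_natR; rewrite !mult_INR /=; lra.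
  have Ap : 0 < INR #|A| by apply: pos_nat.
  have d'p : 0 <= INR d' by apply: pos_INR.
  have g1 : forall y, y \in V2' -> leq (degin (fun y x => E x y) A y) d'.
    by move=> y yV; exact: hd'.
  have g2 : leq (2 * d')%nat #|A|.
    apply: leR_nat; rewrite INR2m.
    have h4 : 4 * INR D <= INR n2 by nra.
    have hpos := Rmult_le_pos _ _ (Rlt_le _ _ Ap) (ltac:(lra) : 0 <= INR n2 - 4 * INR D).
    apply (Rmult_le_reg_r (INR n2)) => //; nra.
  have g3 : leq (2 * k1)%nat #|A|.
    apply: leR_nat; rewrite INR2m; rewrite en1 in hAR; nra.
  have [T [W [sTA [cT [sWV [hWT hW]]]]]] := greedy g1 g2 g3.
  move: hW; set q := 2 * INR d' / INR #|A| => hW.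
  have q8 : q * (8 * C) <= 1.
    rewrite /q; apply (Rmult_le_reg_r (INR #|A| * INR n2)); first nra.
    have : 2 * INR d' / INR #|A| * (8 * C) * (INR #|A| * INR n2) = 16 * C * (INR d' * INR n2) by field; lra.
    nra.
  have q0 : 0 <= q by rewrite /q; unfold Rdiv; apply: Rmult_le_pos; [lra| apply: Rlt_le; apply: Rinv_0_lt_compat].
  have hp := pow_1mq k1 (conj q0 (ltac:(nra) : q <= /2)).
  have e1 : -(L2/2 + 1/4) <= -(2 * q * INR k1).
    have : INR k1 <= 2 * C * L1 + 1.
      have := log2_le (ltac:(lra) : 0 <= L1); rewrite -/L1 => h; nra.
    nra.
  have e2 := exp_mono e1.
  have hVp : INR n2 <= 2 * INR #|V2'|.
    have := leR_natR hB; rewrite INR2m => h.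
    have : INR #|V2'| + INR #|~: V2'| = INR n2 by rewrite -plus_INR; congr INR.
    lra.
  have e3 : INR #|V2'| * exp (-(L2/2 + 1/4)) <= INR #|W|.
    apply: Rle_trans hW; apply: Rmult_le_compat_l; [apply: pos_INR | lra].
  have e4 : exp (L2 / 4) <= exp L2 * exp (-(L2/2 + 1/4)).
    rewrite -exp_plus; apply: exp_mono; lra.
  have e5 := exp_sq (ltac:(lra) : 0 <= L2 / 4).
  have ep : 0 < exp (-(L2/2 + 1/4)) by apply: exp_pos.
  have hkW : INR k2 <= INR #|W| by nra.
  have [T2 [sT2 cT2]] := sub_exact (leR_nat hkW).
  apply: hR'; exists T, T2; split => //; split => //; right.
  move=> x y xT yT2; apply: hWT => //; exact: (subsetP sT2).
Qed.

Lemma ramsey_compl (C : R) (V1 V2 : finType) (E : V1 -> V2 -> bool) :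
  bipartite_ramsey C E -> bipartite_ramsey C (fun x y => ~~ E x y).
Proof.
move=> hR t1 t2 a b [T1 [T2 [c1 [c2 H]]]]; apply: (hR t1 t2 a b).
exists T1, T2; split => //; split => //.
case: H => H; [right|left] => x y xa yb; have := H x y xa yb => //.
by move/negPn.
Qed.

Local Close Scope R_scope.

Theorem corollary2p2 :
  forall C : R, (C > 1)%R ->
  exists nC : nat,
    forall (V1 V2 : finType) (E : V1 -> V2 -> bool),
      bipartite_ramsey C E ->
      nC <= #|V1| -> nC <= #|V2| ->
      exists S : {set V1},
        (3 * #|S| >= 2 * #|V1|)%N /\
        forall v, v \in S ->
          (INR #|V2| / (32 * C) <= INR (deg1 E v))%R /\
          (INR (deg1 E v) <= (1 - / (32 * C)) * INR #|V2|)%R.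
Proof.
move=> C hC; have [nC hnC] := INR_unbounded (exp (1000 * C)).
exists nC => V1 V2 E hR h1 h2.
have ep := exp_pos (1000 * C).
have hn1 : (exp (1000 * C) < INR #|V1|)%R by apply: Rlt_le_trans (leR_natR h1); lra.
have hn2 : (exp (1000 * C) < INR #|V2|)%R by apply: Rlt_le_trans (leR_natR h2); lra.
have L1 : (1000 * C <= ln (INR #|V1|))%R by rewrite -{1}(ln_exp (1000 * C)); apply: ln_mono => //; lra.
have L2 : (1000 * C <= ln (INR #|V2|))%R by rewrite -{1}(ln_exp (1000 * C)); apply: ln_mono => //; lra.
have p1 : (0 < #|V1|)%N by apply/ltP; apply: INR_lt; change (INR 0) with 0%R; exact: (Rlt_trans _ _ _ ep hn1).
have p2 : (0 < #|V2|)%N by apply/ltP; apply: INR_lt; change (INR 0) with 0%R; exact: (Rlt_trans _ _ _ ep hn2).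
have lo1 := low hC hR L1 L2 p1 p2.
have lo2 := low hC (ramsey_compl hR) L1 L2 p1 p2.
move: lo1 lo2.
set A1 := [set v | rltb _ _]; set A2 := [set v | rltb _ _] => lo1 lo2.
exists (~: (A1 :|: A2)); split.
  have := cardsC (A1 :|: A2); have := cardsU A1 A2; lia.
move=> v; rewrite !inE negb_or => /andP [nA1 nA2].
have dle : (deg1 E v <= #|V2|)%N by apply: max_card.
have dc : deg1 (fun x y => ~~ E x y) v = (#|V2| - deg1 E v)%N.
  rewrite /deg1; have -> : [set y | ~~ E v y] = ~: [set y | E v y] by apply/setP => y; rewrite !inE.
  have := cardsC [set y | E v y]; lia.
split.
  apply: Rnot_lt_le => h; move/negP: nA1; apply; exact/rltbP.
have h : (INR #|V2| / (32 * C) <= INR (deg1 (fun x y => ~~ E x y) v))%R.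
  apply: Rnot_lt_le => h; move/negP: nA2; apply; exact/rltbP.
move: h; rewrite dc minus_INR; last by apply/leP.
have : ((1 - / (32 * C)) * INR #|V2| = INR #|V2| - INR #|V2| / (32 * C))%R by field; lra.
lra.
Qed.
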